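(* Let $K$ be a field, $S=K[x_1,\ldots,x_n]$, let $m<n$, let $S'=K[x_1,\ldots,x_m]$ and let $J\subset S'$ be a monomial ideal. Set $I=JS$. Then for any $k$ with $m<k\le n$, \[ \operatorname{sdepth}(S/(I,x_k))=\operatorname{sdepth}(S/I)-1. \]
   Context: For a monomial ideal $I\subset S$, let $I^c$ be the $K$-linear subspace of $S$ spanned by all monomials not in $I$, so $S/I\cong I^c$ as $K$-vector spaces. For a monomial $v$ and a subset $Z\subset\{x_1,\ldots,x_n\}$, the $K$-subspace $vK[Z]$ spanned by all monomials $vw$ with $w$ a monomial in $K[Z]$ is a Stanley space of dimension $|Z|$. A Stanley decomposition $\mathcal D$ of $S/I$ is a decomposition of $I^c$ as a finite direct sum of Stanley spaces; $\operatorname{sdepth}(\mathcal D)$ is the minimal dimension of a Stanley space in $\mathcal D$, and $\operatorname{sdepth}(S/I)$ is the maximum of $\operatorname{sdepth}(\mathcal D)$ over all Stanley decompositions $\mathcal D$ of $S/I$. *)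

(* Defs.v *)
From mathcomp Require Import all_boot.
Set Implicit Arguments. Unset Strict Implicit. Unset Printing Implicit Defensive.

(* monomials x^u of K[x_1,...,x_n], u : exponent vector; index i : 'I_n
   stands for the variable x_{i+1} *)
Definition mon (n : nat) := {ffun 'I_n -> nat}.

(* a set of monomials; a monomial ideal is identified with the set of
   monomials it contains (it is spanned by them) *)
Definition monset (n : nat) := mon n -> Prop.

Definition mdiv n (u v : mon n) : bool := [forall i, u i <= v i].

Definition is_monomial_ideal n (I : monset n) : Prop :=
  forall u v : mon n, I u -> mdiv u v -> I v.

Definition mon1 n : mon n := [ffun => 0%N].

Definition restr m n (hmn : m <= n) (u : mon n) : mon m :=
  [ffun i : 'I_m => u (widen_ord hmn i)].

(* extension J S of J in K[x_1..x_m] to S = K[x_1..x_n]: a monomial of S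
   lies in JS iff its K[x_1..x_m]-part lies in J *)
Definition extend_ideal m n (hmn : m <= n) (J : monset m) : monset n :=
  fun u => J (restr hmn u).

Definition add_var n (I : monset n) (k : 'I_n) : monset n :=
  fun u => I u \/ (0 < u k)%N.

(* Stanley space v K[Z], given by the pair (v, Z) *)
Definition stanley_space n := (mon n * {set 'I_n})%type.

(* membership of the monomial u in v K[Z]: u = v w with w in K[Z] *)
Definition in_stanley n (p : stanley_space n) (u : mon n) : bool :=
  mdiv p.1 u && [forall i, (i \notin p.2) ==> (u i == p.1 i)].

(* D is a Stanley decomposition of S/I: I^c is the direct sum of the
   Stanley spaces of D, i.e. (monomials being a basis) every monomial not
   in I lies in exactly one space of D and monomials in I lie in none. *)
Definition stanley_decomposition n (I : monset n) (D : seq (stanley_space n)) :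
  Prop :=
  forall u : mon n,
    (~ I u -> count (fun p => in_stanley p u) D = 1%N) /\
    (I u -> count (fun p => in_stanley p u) D = 0%N).

Definition sdepth_ge n (I : monset n) (d : nat) : Prop :=
  exists D : seq (stanley_space n),
    stanley_decomposition I D /\ (forall p, p \in D -> d <= #|p.2|).

(* sdepth(S/I) = d  (maximum over decompositions of the minimal dimension) *)
Definition is_sdepth n (I : monset n) (d : nat) : Prop :=
  sdepth_ge I d /\ ~ sdepth_ge I d.+1.

(* Main.v *)
Require Import Defs.
From mathcomp Require Import all_boot.
From mathcomp Require Import zify.
From Stdlib Require Import Classical ClassicalEpsilon.
Set Implicit Arguments. Unset Strict Implicit. Unset Printing Implicit Defensive.

Definition ext n (j : nat) (u : mon n) : mon n.+1 :=
  [ffun i => if unlift ord0 i is Some i' then u i' else j].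
Definition tl n (u : mon n.+1) : mon n := [ffun i => u (lift ord0 i)].

Lemma ext0 n j (u : mon n) : ext j u ord0 = j.
Proof. by rewrite ffunE unlift_none. Qed.
Lemma extS n j (u : mon n) i : ext j u (lift ord0 i) = u i.
Proof. by rewrite ffunE liftK. Qed.
Lemma ext_tl n (u : mon n.+1) : ext (u ord0) (tl u) = u.
Proof.
apply/ffunP => i; rewrite ffunE; case: unliftP => [i' ->|->] //; by rewrite ffunE.
Qed.

Lemma forall_S n (P : pred 'I_n.+1) :
  [forall i, P i] = P ord0 && [forall i : 'I_n, P (lift ord0 i)].
Proof.
apply/forallP/andP => [H|[H0 /forallP H]]; first by split => //; apply/forallP => i.
move=> i; case: (unliftP ord0 i) => [j ->|->] //.
Qed.

Lemma mdiv_refl n (u : mon n) : mdiv u u.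
Proof. by apply/forallP => i. Qed.

Lemma mdiv_ext n i j (v u : mon n) : mdiv (ext i v) (ext j u) = (i <= j) && mdiv v u.
Proof.
rewrite /mdiv forall_S !ext0; congr andb; apply: eq_forallb => x; by rewrite !extS.
Qed.

Lemma mon0_eq (u : mon 0) : u = mon1 0.
Proof. apply/ffunP => i; have := ltn_ord i; by rewrite ltn0. Qed.

Definition FG n := forall U : monset n, is_monomial_ideal U ->
  exists s : seq (mon n), forall u, U u <-> exists2 g, g \in s & mdiv g u.

Lemma bound_list (T : eqType) (Q : T -> nat -> Prop) (s : seq T) :
  (forall g, g \in s -> exists j, Q g j) ->
  exists N, forall g, g \in s -> exists2 j, j <= N & Q g j.
Proof.
elim: s => [|a s IH] H; first by exists 0 => g; rewrite in_nil.
have [ja Ha] := H a (mem_head _ _).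
have [N HN] : exists N, forall g, g \in s -> exists2 j, j <= N & Q g j.
  by apply: IH => g gs; apply: H; rewrite inE gs orbT.
exists (maxn ja N) => g; rewrite inE => /orP [/eqP ->|gs].
  by exists ja => //; rewrite leq_maxl.
have [j hj Hj] := HN g gs; exists j => //; lia.
Qed.

Lemma Stab n : FG n -> forall U : monset n.+1, is_monomial_ideal U ->
  exists N, forall u j, N <= j -> U (ext j u) -> U (ext N u).
Proof.
move=> fg U hU. pose V u := exists j, U (ext j u).
have hV : is_monomial_ideal V.
  move=> u v [j Hj] d; exists j; apply: hU Hj _; by rewrite mdiv_ext leqnn d.
have [s Hs] := fg V hV.
have : forall g, g \in s -> exists j, U (ext j g).
  move=> g gs; apply/(Hs g); exists g => //; exact: mdiv_refl.
case/bound_list => N HN; exists N => u j hj Hu.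
have : V u by exists j.
move/Hs => [g gs dg]; have [j' hj' Hj'] := HN g gs.
apply: hU Hj' _; by rewrite mdiv_ext hj' dg.
Qed.

Lemma FG0 : FG 0.
Proof.
move=> U hU; case: (classic (U (mon1 0))) => H.
  exists [:: mon1 0] => u; rewrite (mon0_eq u); split => // _.
  by exists (mon1 0); rewrite ?inE // mdiv_refl.
exists [::] => u; rewrite (mon0_eq u); split => // -[g]; by rewrite in_nil.
Qed.

Lemma FGS n : FG n -> FG n.+1.
Proof.
move=> fg U hU; have [N HN] := Stab fg hU.
have hUj : forall j, is_monomial_ideal (fun u => U (ext j u)).
  move=> j u v Hu d; apply: hU Hu _; by rewrite mdiv_ext leqnn.
have hf := fun j => fg _ (hUj j).
pose f j := proj1_sig (constructive_indefinite_description _ (hf j)).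
have Hf : forall j u, U (ext j u) <-> exists2 g, g \in f j & mdiv g u.
  move=> j; exact: (proj2_sig (constructive_indefinite_description _ (hf j))).
exists [seq ext j g | j <- iota 0 N.+1, g <- f j].
move=> u; rewrite -(ext_tl u); move: (u ord0) (tl u) => j u'.
split.
- move=> Hu; case: (leqP j N) => hjN.
  + have [g gs dg] := (Hf j u').1 Hu; exists (ext j g).
      by apply/allpairsPdep; exists j, g; split => //; rewrite mem_iota; lia.
    by rewrite mdiv_ext leqnn dg.
  + have Hu' := HN u' j (ltnW hjN) Hu.
    have [g gs dg] := (Hf N u').1 Hu'; exists (ext N g).
      by apply/allpairsPdep; exists N, g; split => //; rewrite mem_iota; lia.
    by rewrite mdiv_ext (ltnW hjN) dg.
- case=> g /allpairsPdep [i [h [hi hh ->]]] d.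
  have Hh : U (ext i h) by apply/(Hf i h); exists h => //; exact: mdiv_refl.
  exact: hU Hh d.
Qed.

Lemma FG_all n : FG n.
Proof. elim: n => [|n IH]; [exact: FG0 | exact: FGS]. Qed.

Definition lifts n (Z : {set 'I_n}) : {set 'I_n.+1} := [set lift ord0 i | i in Z].

Lemma in_lifts n (Z : {set 'I_n}) i : (lift ord0 i \in lifts Z) = (i \in Z).
Proof. by rewrite mem_imset //; exact: lift_inj. Qed.
Lemma ord0_lifts n (Z : {set 'I_n}) : (ord0 \in lifts Z) = false.
Proof. by apply/imsetP => -[i _ /eqP]; rewrite (negbTE (neq_lift _ _)). Qed.

Lemma in_low n i j (v u : mon n) (Z : {set 'I_n}) :
  in_stanley (ext i v, lifts Z) (ext j u) = (i == j) && in_stanley (v, Z) u.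
Proof.
rewrite /in_stanley /= mdiv_ext forall_S ord0_lifts /= !ext0.
have -> : [forall x, (lift ord0 x \notin lifts Z) ==> (ext j u (lift ord0 x) == ext i v (lift ord0 x))]
   = [forall x, (x \notin Z) ==> (u x == v x)].
  by apply/eq_forallb => x; rewrite in_lifts !extS.
rewrite [j == i]eq_sym; case: eqP => [->|]; rewrite ?leqnn /= ?andbF //.
Qed.

Lemma in_top n N j (v u : mon n) (Z : {set 'I_n}) :
  in_stanley (ext N v, ord0 |: lifts Z) (ext j u) = (N <= j) && in_stanley (v, Z) u.
Proof.
rewrite /in_stanley /= mdiv_ext forall_S in_setU1 eqxx /=.
have -> : [forall x, (lift ord0 x \notin ord0 |: lifts Z) ==> (ext j u (lift ord0 x) == ext N v (lift ord0 x))]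
   = [forall x, (x \notin Z) ==> (u x == v x)].
  by apply/eq_forallb => x; rewrite in_setU1 eq_sym (negbTE (neq_lift _ _)) in_lifts !extS.
by rewrite andbA.
Qed.

Fixpoint lowD n (f : nat -> seq (stanley_space n)) N : seq (stanley_space n.+1) :=
  if N is N'.+1 then lowD f N' ++ [seq (ext N' p.1, lifts p.2) | p <- f N'] else [::].

Lemma count_false T (s : seq T) : count (fun _ => false) s = 0.
Proof. by elim: s. Qed.

Lemma count_lowD n (f : nat -> seq (stanley_space n)) N j u :
  count (fun p => in_stanley p (ext j u)) (lowD f N) =
  if j < N then count (fun p => in_stanley p u) (f j) else 0.
Proof.
elim: N => [|N IH] //=; rewrite count_cat IH count_map.
rewrite [count (preim _ _) _](eq_count (a2 := fun p => (N == j) && in_stanley p u)); last first.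
  by case=> v Z; rewrite /= -in_low.
case: (eqVneq N j) => [<-|ne].
  by rewrite ltnn ltnSn /=; apply: eq_count.
rewrite [count _ (f N)](eq_count (a2 := fun _ => false)) // count_false addn0.
have -> : (j < N.+1) = (j < N) by rewrite ltnS leq_eqVlt eq_sym (negbTE ne).
done.
Qed.

Definition Dec n := forall U : monset n, is_monomial_ideal U ->
  exists D, stanley_decomposition U D.

Lemma Dec0 : Dec 0.
Proof.
move=> U hU; case: (classic (U (mon1 0))) => H.
  by exists [::] => u; rewrite (mon0_eq u).
exists [:: (mon1 0, set0)] => u; rewrite (mon0_eq u); split => // _ /=.
suff -> : in_stanley (mon1 0, set0) (mon1 0) by [].
by rewrite /in_stanley mdiv_refl; apply/forallP => i; have := ltn_ord i; by rewrite ltn0.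
Qed.

Lemma DecS n : FG n -> Dec n -> Dec n.+1.
Proof.
move=> fg dec U hU; have [N HN] := Stab fg hU.
have hUj : forall j, is_monomial_ideal (fun u => U (ext j u)).
  move=> j u v Hu d; apply: hU Hu _; by rewrite mdiv_ext leqnn.
have hf := fun j => dec _ (hUj j).
pose f j := proj1_sig (constructive_indefinite_description _ (hf j)).
have Hf : forall j, stanley_decomposition (fun u => U (ext j u)) (f j).
  move=> j; exact: (proj2_sig (constructive_indefinite_description _ (hf j))).
exists (lowD f N ++ [seq (ext N p.1, ord0 |: lifts p.2) | p <- f N]).
move=> u; rewrite -(ext_tl u); move: (u ord0) (tl u) => j u'.
rewrite count_cat count_lowD count_map.
rewrite [count (preim _ _) _](eq_count (a2 := fun p => (N <= j) && in_stanley p u')); last first.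
  by case=> v Z; rewrite /= -in_top.
case: (ltnP j N) => hj /=.
  rewrite count_false addn0.
  exact: Hf.
have [H1 H2] := Hf N u'; split => [nU|Uu].
  rewrite H1 //; move=> HN'; apply: nU; apply: hU HN' _; by rewrite mdiv_ext hj mdiv_refl.
rewrite H2 //; exact: HN u' j hj Uu.
Qed.

Lemma Dec_all n : Dec n.
Proof. elim: n => [|n IH]; [exact: Dec0 | move=> U hU; exact: (@DecS n (@FG_all n) IH U hU)]. Qed.

Definition setk n (k : 'I_n) (c : nat) (u : mon n) : mon n :=
  [ffun i => if i == k then c else u i].

Lemma in_stanley_D1 n (k : 'I_n) (v u : mon n) (Z : {set 'I_n}) :
  v k = 0 -> u k = 0 -> in_stanley (v, Z :\ k) u = in_stanley (v, Z) u.
Proof.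
move=> vk uk; rewrite /in_stanley /=; congr andb; apply: eq_forallb => i.
rewrite in_setD1; case: (eqVneq i k) => [->|] /=; by rewrite ?uk ?vk ?implybT.
Qed.

Lemma in_stanley_U1 n (k : 'I_n) (v u : mon n) (Z : {set 'I_n}) :
  v k = 0 -> k \notin Z ->
  in_stanley (v, k |: Z) u = in_stanley (v, Z) (setk k 0 u).
Proof.
move=> vk kZ; rewrite /in_stanley /=; congr andb.
  apply: eq_forallb => i; rewrite ffunE; case: (eqVneq i k) => [->|] //=.
  by rewrite vk.
apply: eq_forallb => i; rewrite ffunE in_setU1; case: (eqVneq i k) => [->|] /=.
  by rewrite (negbTE kZ) vk.
by [].
Qed.

Lemma up n (I : monset n) k d : sdepth_ge I d.+1 -> sdepth_ge (add_var I k) d.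
Proof.
case=> D [HD Hd].
exists (map (fun p : stanley_space n => (p.1, p.2 :\ k)) (filter (fun p : stanley_space n => p.1 k == 0) D)); split.
- move=> u; rewrite count_map count_filter.
  case: (posnP (u k)) => [uk0|ukpos].
  + have -> : count (predI (preim (fun p : stanley_space n => (p.1, p.2 :\ k))
         (fun p => in_stanley p u)) (fun p => p.1 k == 0)) D
       = count (fun p => in_stanley p u) D.
      apply: eq_count => -[v Z] /=.
      case: (eqVneq (v k) 0) => [vk|vk]; first by rewrite in_stanley_D1 // andbT.
      rewrite andbF; symmetry; apply/negP => /andP [/forallP /(_ k)].
      move: vk; rewrite uk0 /= => vk h _; move: vk h; lia.
    have [H1 H2] := HD u; split => h.
      by apply: H1 => hI; apply: h; left.
    by apply: H2; case: h => //; rewrite uk0.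
  + split => [h|_]; first by exfalso; apply: h; right.
    rewrite (eq_count (a2 := fun _ => false)) ?count_false //.
    move=> -[v Z] /=; apply/negP => /andP [/andP [_ /forallP /(_ k)]].
    rewrite /= in_setD1 eqxx /= => /eqP h /eqP h2; lia.
- move=> p /mapP [q]; rewrite mem_filter => /andP [_ qD] ->.
  rewrite /=; have := Hd q qD; rewrite (cardsD1 k q.2); case: (k \in q.2) => /=; [by rewrite add1n ltnS | by rewrite add0n => /ltnW].
Qed.

Lemma down n (I : monset n) k d :
  (forall u, I u <-> I (setk k 0 u)) ->
  sdepth_ge (add_var I k) d -> sdepth_ge I d.+1.
Proof.
move=> indep [D [HD Hd]].
have cnt : forall p w, p \in D -> in_stanley p w -> add_var I k w -> False.
  move=> p w pD hw Hw; have := (HD w).2 Hw.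
  have : has (fun p => in_stanley p w) D by apply/hasP; exists p.
  by rewrite has_count => /[swap] ->.
have Hsp : forall p, p \in D -> p.1 k = 0 /\ k \notin p.2.
  move=> [v Z] pD /=.
  have vk : v k = 0.
    apply/eqP; apply/negPn/negP => hv; apply: (cnt _ v pD).
      by rewrite /in_stanley mdiv_refl; apply/forallP => i; rewrite eqxx implybT.
    by right; rewrite lt0n.
  split => //; apply/negP => kZ.
  apply: (cnt _ (setk k (v k).+1 v) pD); last by right; rewrite ffunE eqxx.
  rewrite /in_stanley /=; apply/andP; split.
    by apply/forallP => i; rewrite ffunE; case: eqP => [->|] //.
  apply/forallP => i; apply/implyP => iZ; rewrite ffunE.
  case: (eqVneq i k) => [ik|_]; last by [].
  by move: iZ; rewrite ik kZ.
exists (map (fun p : stanley_space n => (p.1, k |: p.2)) D); split.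
- move=> u; rewrite count_map.
  have -> : count (preim (fun p : stanley_space n => (p.1, k |: p.2))
         (fun p => in_stanley p u)) D
       = count (fun p => in_stanley p (setk k 0 u)) D.
    apply: eq_in_count => -[v Z] pD /=; have [vk kZ] := Hsp _ pD.
    exact: in_stanley_U1.
  have [H1 H2] := HD (setk k 0 u).
  have e : add_var I k (setk k 0 u) <-> I u.
    rewrite /add_var ffunE eqxx ltnn; split; last by move/(indep u).1; left.
    by case => [/(indep u).2|].
  split => h; [apply: H1 | apply: H2]; by rewrite e.
- move=> p /mapP [q qD ->] /=; have [_ kq] := Hsp q qD.
  by rewrite cardsU1 kq add1n ltnS; exact: Hd.
Qed.

Lemma no_top n (I : monset n) : ~ I (mon1 n) -> ~ sdepth_ge I n.+1.
Proof.
move=> nI [D [HD Hd]]; have c := (HD (mon1 n)).1 nI.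
have : has (fun p => in_stanley p (mon1 n)) D by rewrite has_count c.
case/hasP => p pD _; have := Hd p pD.
have := max_card (mem p.2); rewrite card_ord => h1 h2.
by have := leq_trans h2 h1; rewrite ltnn.
Qed.

Lemma exists_max (P : nat -> Prop) b : forall a,
  P a -> ~ P (a + b) -> exists d, a <= d /\ P d /\ ~ P d.+1.
Proof.
elim: b => [|b IH] a Pa nP; first by rewrite addn0 in nP.
case: (classic (P a.+1)) => h.
  have [d [ad rest]] := IH a.+1 h (ltac:(by rewrite addSnnS)).
  by exists d; split => //; apply: ltnW.
by exists a.
Qed.

Theorem lemma1p2 (n m : nat) (hmn : m < n) (J : monset m)
  (hJ : is_monomial_ideal J) (hJprop : ~ J (mon1 m))
  (k : 'I_n) (hk : m <= k) :
  exists s : nat,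
    is_sdepth (extend_ideal (ltnW hmn) J) s.+1 /\
    is_sdepth (add_var (extend_ideal (ltnW hmn) J) k) s.
Proof.
set I := extend_ideal (ltnW hmn) J.
have hI : is_monomial_ideal I.
  move=> u v; rewrite /I /extend_ideal => Hu d; apply: hJ Hu _.
  by apply/forallP => i; rewrite !ffunE; exact: (forallP d).
have hIk : is_monomial_ideal (add_var I k).
  move=> u v [Hu|Hu] d; [left; exact: hI Hu d | right].
  by apply: leq_trans Hu _; exact: (forallP d k).
have indep : forall u, I u <-> I (setk k 0 u).
  move=> u; rewrite /I /extend_ideal.
  suff -> : restr (ltnW hmn) (setk k 0 u) = restr (ltnW hmn) u by [].
  apply/ffunP => i; rewrite !ffunE; case: eqP => // /(congr1 val) /= h.
  have := ltn_ord i; lia.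
have nI1 : ~ I (mon1 n).
  rewrite /I /extend_ideal.
  suff -> : restr (ltnW hmn) (mon1 n) = mon1 m by [].
  by apply/ffunP => i; rewrite !ffunE.
have [D0 HD0] := @Dec_all n _ hIk.
have P1 : sdepth_ge I 1 by apply: (down indep); exists D0; split.
have [d [d1 [Pd nPd]]] := @exists_max (sdepth_ge I) n 1 P1 (no_top nI1).
case: d d1 Pd nPd => [//|s] _ Ps nPs.
exists s; split; first by split.
split; first exact: up.
by move=> h; apply: nPs; exact: down indep h.
Qed.
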